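(* Let $A$ and $B$ be $k$-algebras and $\tau\colon B\otimes A\to A\otimes B$ a twisting map. Equip $A$, $B$ and $A\otimes_\tau B$ with their cofinite topologies. Then the linear isomorphism $A\otimes^! B\to A\otimes_\tau B$ given by the identity on the underlying vector space $A\otimes B$ is continuous.
   Context: $k$ is a field (discrete topology). All algebras are unital associative. For an algebra $R$, $\mathcal F(R)$ is the set of two-sided ideals of finite codimension, and the cofinite topology on $R$ is the linear topology whose open subspaces are those containing some element of $\mathcal F(R)$. For linearly topologized spaces $E,F$, $E\otimes^!F$ is $E\otimes F$ with the linear topology whose open subspaces are those containing $E_0\otimes F+E\otimes F_0$ for some open subspaces $E_0\subseteq E$, $F_0\subseteq F$. A linear map $\tau\colon B\otimes A\to A\otimes B$ is a twisting map if the multiplication $m_\tau=(m_A\otimes m_B)\circ(\mathrm{id}_A\otimes\tau\otimes\mathrm{id}_B)$ on $A\otimes B$ is associative with identity $1_A\otimes 1_B$; the resulting algebra is the twisted tensor product $A\otimes_\tau B$, and $a\mapsto a\otimes 1$, $b\mapsto 1\otimes b$ are algebra homomorphisms into it. *)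

(* Defs.v *)
From HB Require Import structures.
From mathcomp Require Import all_boot all_order all_algebra.
Set Implicit Arguments. Unset Strict Implicit. Unset Printing Implicit Defensive.
Import GRing.Theory.
Local Open Scope ring_scope.

Section Defs.
Variable k : fieldType.

Definition is_subspace (V : lmodType k) (U : V -> Prop) : Prop :=
  U 0 /\ forall (c : k) (x y : V), U x -> U y -> U (c *: x + y).

Definition subpred (V : Type) (U W : V -> Prop) : Prop := forall x, U x -> W x.

Definition span_of (V : lmodType k) (S : V -> Prop) : V -> Prop :=
  fun v => forall U : V -> Prop, is_subspace U -> subpred S U -> U v.

Definition fin_codim (V : lmodType k) (U : V -> Prop) : Prop :=
  exists (n : nat) (e : 'I_n -> V), forall v : V,
    exists c : 'I_n -> k, U (v - \sum_(i < n) c i *: e i).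

Definition cofinite_ideal (V : lmodType k) (mul : V -> V -> V) (I : V -> Prop)
  : Prop :=
  [/\ is_subspace I, (forall x y, I y -> I (mul x y) /\ I (mul y x))
    & fin_codim I].

Definition cofinite_open (V : lmodType k) (mul : V -> V -> V) (U : V -> Prop)
  : Prop :=
  is_subspace U /\ exists I, cofinite_ideal mul I /\ subpred I U.

Definition is_linear (U V : lmodType k) (f : U -> V) : Prop :=
  forall (c : k) (x y : U), f (c *: x + y) = c *: f x + f y.

Definition is_bilinear (A B V : lmodType k) (f : A -> B -> V) : Prop :=
  (forall b, is_linear (fun a => f a b)) /\ (forall a, is_linear (f a)).

Definition is_tensor_product (A B T : lmodType k) (t : A -> B -> T) : Prop :=
  is_bilinear t /\
  forall (V : lmodType k) (f : A -> B -> V), is_bilinear f ->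
    exists! g : T -> V, is_linear g /\ forall a b, g (t a b) = f a b.

(* open subspaces of A (x)^! B, where A and B carry their cofinite
   topologies: subspaces containing E0 (x) B + A (x) F0 = span of the
   t a b with a in E0 or b in F0, for open E0, F0 *)
Definition bang_open (A B : algType k) (T : lmodType k) (t : A -> B -> T)
  (U : T -> Prop) : Prop :=
  is_subspace U /\
  exists (E0 : A -> Prop) (F0 : B -> Prop),
    [/\ cofinite_open *%R E0, cofinite_open *%R F0 &
        subpred (span_of (fun v => exists a b, v = t a b /\ (E0 a \/ F0 b))) U].

(* [mul] is the multiplication m_tau = (m_A (x) m_B) o (id (x) tau (x) id)
   on T = A (x) B: it is bilinear and on pure tensors
   m_tau (a(x)b, a'(x)b') = (L_{a,b'} o tau)(b (x) a'), where L_{a,b'} is the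
   linear map x (x) y |-> a x (x) y b'. *)
Definition is_twisted_mul (A B : algType k) (T T' : lmodType k)
  (t : A -> B -> T) (t' : B -> A -> T') (tau : T' -> T)
  (mul : T -> T -> T) : Prop :=
  is_bilinear mul /\
  forall (a : A) (b : B) (a' : A) (b' : B) (L : T -> T),
    is_linear L -> (forall x y, L (t x y) = t (a * x) (y * b')) ->
    mul (t a b) (t a' b') = L (tau (t' b a')).

Definition is_twisting_map (A B : algType k) (T T' : lmodType k)
  (t : A -> B -> T) (t' : B -> A -> T') (tau : T' -> T)
  (mul : T -> T -> T) : Prop :=
  [/\ is_linear tau, is_twisted_mul t t' tau mul,
      (forall x y z, mul x (mul y z) = mul (mul x y) z)
    & forall x, mul (t 1 1) x = x /\ mul x (t 1 1) = x].

Definition lin_continuous (X Y : lmodType k) (openX : (X -> Prop) -> Prop)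
  (openY : (Y -> Prop) -> Prop) (f : X -> Y) : Prop :=
  forall U : Y -> Prop, openY U -> openX (fun x => U (f x)).

End Defs.

(* Main.v *)
Require Import Defs.
From mathcomp Require Import all_boot all_order all_algebra.
From Stdlib Require Import Classical.
Local Open Scope ring_scope.
Import GRing.Theory.
Set Implicit Arguments. Unset Strict Implicit.

Section Helpers.
Variable k : fieldType.

Lemma lin0 (V W : lmodType k) (f : V -> W) : is_linear f -> f 0 = 0.
Proof.
move=> fl; have H := fl 1 0 0; rewrite scale1r addr0 scale1r in H.
by apply: (@addrI _ (f 0)); rewrite addr0 -H.
Qed.

Lemma linD (V W : lmodType k) (f : V -> W) x y : is_linear f -> f (x + y) = f x + f y.
Proof. by move=> fl; have := fl 1 x y; rewrite !scale1r. Qed.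

Lemma linZ (V W : lmodType k) (f : V -> W) c x : is_linear f -> f (c *: x) = c *: f x.
Proof. by move=> fl; have := fl c x 0; rewrite !addr0 (lin0 fl) addr0. Qed.

Lemma linB (V W : lmodType k) (f : V -> W) x y : is_linear f -> f (x - y) = f x - f y.
Proof.
move=> fl; have := fl (-1) y x; rewrite !scaleN1r => H; by rewrite addrC H addrC.
Qed.

Lemma subD (V : lmodType k) (I : V -> Prop) x y : is_subspace I -> I x -> I y -> I (x + y).
Proof. by move=> [_ H] Ix Iy; have := H 1 x y Ix Iy; rewrite scale1r. Qed.

Lemma subZ (V : lmodType k) (I : V -> Prop) c x : is_subspace I -> I x -> I (c *: x).
Proof. by move=> [I0 H] Ix; have := H c x 0 Ix I0; rewrite addr0. Qed.

Lemma subB (V : lmodType k) (I : V -> Prop) x y : is_subspace I -> I x -> I y -> I (x - y).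
Proof. by move=> Is Ix Iy; apply: subD => //; rewrite -scaleN1r; apply: subZ. Qed.

Lemma fin_codim_preim (V W : lmodType k) (f : V -> W) (flin : is_linear f) n :
 forall (I : W -> Prop) (e : 'I_n -> W), is_subspace I ->
 (forall v, exists c : 'I_n -> k, I (f v - \sum_(i<n) c i *: e i)) ->
 fin_codim (fun v => I (f v)).
Proof.
elim: n => [|n IH] I e Is H.
  exists 0%N, (fun _ => 0) => v; exists (fun _ => 0).
  by have [c] := H v; rewrite !big_ord0 !subr0.
pose I' := fun w => exists d, I (w - d *: e ord_max).
have I's : is_subspace I'.
  split; first by exists 0; rewrite scale0r subr0; case: Is.
  move=> c x y [dx Hx] [dy Hy]; exists (c * dx + dy).
  rewrite scalerDl opprD addrACA -scalerA -scalerBr.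
  by case: Is => _ Is; apply: Is.
have Hh : forall v, exists c : 'I_n -> k,
    I' (f v - \sum_(i < n) c i *: e (widen_ord (leqnSn n) i)).
  move=> v; have [c Hc] := H v; exists (fun i => c (widen_ord (leqnSn n) i)).
  exists (c ord_max); move: Hc; by rewrite big_ord_recr /= opprD addrA.
have [m [g Hg]] := IH I' _ I's Hh.
case: (classic (exists v0, I (f v0 - e ord_max))) => [[v0 Hv0]|Hno].
  exists m.+1, (fun j => match unlift ord_max j with Some j' => g j' | None => v0 end).
  move=> v; have [c' [d Hd]] := Hg v.
  exists (fun j => match unlift ord_max j with Some j' => c' j' | None => d end).
  rewrite big_ord_recr /= unlift_none.
  have E : forall i : 'I_m, unlift ord_max (widen_ord (leqnSn m) i) = Some i.
    move=> i; have -> : widen_ord (leqnSn m) i = lift ord_max i.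
      apply: val_inj; by rewrite /= /bump leqNgt ltn_ord.
    by rewrite liftK.
  under eq_bigr => i _ do rewrite E.
  rewrite opprD addrA linB // linZ //.
  have := subB Is Hd (subZ d Is Hv0).
  by rewrite scalerBr opprB addrA subrK.
exists m, g => v; have [c' [d Hd]] := Hg v; exists c'.
case: (eqVneq d 0) => [d0|dn0]; first by move: Hd; rewrite d0 scale0r subr0.
exfalso; apply: Hno; exists (d^-1 *: (v - \sum_(i < m) c' i *: g i)).
have := subZ d^-1 Is Hd.
by rewrite scalerBr scalerA mulVf // scale1r linZ.
Qed.

End Helpers.

Theorem lemma3p3 (k : fieldType) (A B : algType k) (T T' : lmodType k)
  (t : A -> B -> T) (t' : B -> A -> T') (tau : T' -> T) (mul : T -> T -> T) :
  is_tensor_product t -> is_tensor_product t' ->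
  is_twisting_map t t' tau mul ->
  lin_continuous (bang_open t) (cofinite_open mul) id.
Proof.
move=> [[tl tr] tU] _ [taul [_ mulL] _ unit] U [Us [I [[Is Iid Icod] IU]]].
have Lex : forall (a : A) (b' : B), exists L : T -> T,
    is_linear L /\ forall x y, L (t x y) = t (a * x) (y * b').
  move=> a b'.
  have bil : is_bilinear (fun (x : A) (y : B) => t (a * x) (y * b')).
    split.
      by move=> y c x x'; rewrite /= mulrDr -scalerAr tl.
    by move=> x c y y'; rewrite /= mulrDl -scalerAl tr.
  have [L [[Ll LE] _]] := tU T _ bil.
  by exists L.
have idl : is_linear (@id T) by [].
have F1 : forall a, tau (t' 1 a) = t a 1.
  move=> a; rewrite -(unit (t a 1)).1.
  by rewrite (mulL 1 1 a 1 id idl) // => x y; rewrite mul1r mulr1.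
have F2 : forall b, tau (t' b 1) = t 1 b.
  move=> b; rewrite -(unit (t 1 b)).2.
  by rewrite (mulL 1 b 1 1 id idl) // => x y; rewrite mul1r mulr1.
have P1 : forall a b, mul (t a 1) (t 1 b) = t a b.
  move=> a b; have [L [Ll LE]] := Lex a b.
  by rewrite (mulL _ _ _ _ L Ll LE) F1 LE mulr1 mul1r.
have P2 : forall x a, mul (t x 1) (t a 1) = t (x * a) 1.
  move=> x a; have [L [Ll LE]] := Lex x 1.
  by rewrite (mulL _ _ _ _ L Ll LE) F1 LE mulr1.
have P3 : forall y b, mul (t 1 y) (t 1 b) = t 1 (y * b).
  move=> y b; have [L [Ll LE]] := Lex 1 b.
  by rewrite (mulL _ _ _ _ L Ll LE) F2 LE mulr1.
have [I0 _] := Is.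
split => //.
exists (fun a => I (t a 1)), (fun b => I (t 1 b)); split.
- have E0s : is_subspace (fun a => I (t a 1)).
    split; first by rewrite (lin0 (tl 1)).
    by move=> c x y Ix Iy; rewrite tl; case: Is => _; apply.
  split => //; exists (fun a => I (t a 1)); split => //; split => //.
    by move=> x y Iy; rewrite -!P2; split; [apply: (Iid _ _ Iy).1 | apply: (Iid _ _ Iy).2].
  have [n [e He]] := Icod.
  exact: (fin_codim_preim (tl 1) Is (fun a => He (t a 1))).
- have F0s : is_subspace (fun b => I (t 1 b)).
    split; first by rewrite (lin0 (tr 1)).
    by move=> c x y Ix Iy; rewrite tr; case: Is => _; apply.
  split => //; exists (fun b => I (t 1 b)); split => //; split => //.
    by move=> x y Iy; rewrite -!P3; split; [apply: (Iid _ _ Iy).1 | apply: (Iid _ _ Iy).2].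
  have [n [e He]] := Icod.
  exact: (fin_codim_preim (tr 1) Is (fun b => He (t 1 b))).
- move=> v Hv; apply: IU; apply: Hv => //.
  move=> w [a [b [-> [Ia|Ib]]]]; rewrite -P1.
    exact: (Iid _ _ Ia).2.
  exact: (Iid _ _ Ib).1.
Qed.
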